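(* Let $L$ be a regular locale without isolated points, and let $a,b\in L$ with $a^*=0$ and $b\ne0$. Then there exist $c,d\in L$ with $0\ne c\le b$, $0\ne d\le b$, $c\wedge d=0$, and $a\vee c^*=1=a\vee d^*$.
   Context: A frame (locale) $L$ is a complete lattice in which finite meets distribute over arbitrary joins; $x\to y$ is the Heyting implication and $x^*=x\to0$ the pseudocomplement. $L$ is regular if $x=\bigvee\{y\in L\mid y\prec x\}$ for every $x$, where $y\prec x$ means $y^*\vee x=1$. A sublocale of $L$ is a subset closed under arbitrary meets such that $x\to s$ lies in it whenever $s$ does; the open sublocale of $x$ is $\mathfrak{o}(x)=\{x\to y\mid y\in L\}$. A point of $L$ is $p\ne1$ such that $x\wedge y\le p$ implies $x\le p$ or $y\le p$; it is isolated if the sublocale $\{1,p\}$ equals $\mathfrak{o}(x)$ for some $x\in L$. *)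

(* Defs.v *)
Set Implicit Arguments.

Record Frame := {
  carrier :> Type;
  le : carrier -> carrier -> Prop;
  le_refl : forall x, le x x;
  le_trans : forall x y z, le x y -> le y z -> le x z;
  le_antisym : forall x y, le x y -> le y x -> x = y;
  sup : (carrier -> Prop) -> carrier;
  sup_ub : forall (S : carrier -> Prop) x, S x -> le x (sup S);
  sup_least : forall (S : carrier -> Prop) u,
      (forall x, S x -> le x u) -> le (sup S) u;
  meet : carrier -> carrier -> carrier;
  meet_lb1 : forall x y, le (meet x y) x;
  meet_lb2 : forall x y, le (meet x y) y;
  meet_greatest : forall x y z, le z x -> le z y -> le z (meet x y);
  meet_sup_distr : forall x (S : carrier -> Prop),
      meet x (sup S) = sup (fun z => exists s, S s /\ z = meet x s)
}.

Section FrameOps.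
Variable L : Frame.

Definition bot : L := @sup L (fun _ => False).
Definition top : L := @sup L (fun _ => True).
Definition join (x y : L) : L := @sup L (fun z => z = x \/ z = y).
Definition inf (S : L -> Prop) : L := @sup L (fun z => forall s, S s -> @le L z s).
Definition himpl (x y : L) : L := @sup L (fun z => @le L (@meet L z x) y).
Definition pcompl (x : L) : L := himpl x bot.
Definition well_inside (y x : L) : Prop := join (pcompl y) x = top.
Definition regular : Prop :=
  forall x : L, x = @sup L (fun y => well_inside y x).
Definition sublocale (S : L -> Prop) : Prop :=
  (forall T : L -> Prop, (forall t, T t -> S t) -> S (inf T)) /\
  (forall x s, S s -> S (himpl x s)).
Definition open_sublocale (x : L) : L -> Prop := fun z => exists y, z = himpl x y.
Definition is_point (p : L) : Prop :=
  p <> top /\ forall x y, @le L (@meet L x y) p -> @le L x p \/ @le L y p.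
Definition isolated (p : L) : Prop :=
  is_point p /\
  exists x : L, forall z, (z = top \/ z = p) <-> open_sublocale x z.
Definition no_isolated_points : Prop := forall p : L, ~ isolated p.
End FrameOps.

Arguments le {f} _ _.
Arguments sup {f} _.
Arguments meet {f} _ _.
Arguments bot {L}.
Arguments top {L}.
Arguments join {L} _ _.
Arguments inf {L} _.
Arguments himpl {L} _ _.
Arguments pcompl {L} _.
Arguments well_inside {L} _ _.
Arguments is_point {L} _.
Arguments isolated {L} _.

(* Main.v *)
Require Import Defs.
From Stdlib Require Import Classical.
Set Implicit Arguments.
Unset Strict Implicit.

Lemma bot_le (L : Frame) (x : L) : le bot x.
Proof. apply sup_least. intros _ []. Qed.

Lemma le_top (L : Frame) (x : L) : le x top.
Proof. apply sup_ub. exact I. Qed.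

Lemma le_bot_eq (L : Frame) (x : L) : le x bot -> x = bot.
Proof. intros H. apply le_antisym; auto. apply bot_le. Qed.

Lemma top_le_eq (L : Frame) (x : L) : le top x -> x = top.
Proof. intros H. apply le_antisym; auto. apply le_top. Qed.

Lemma join_ub1 (L : Frame) (x y : L) : le x (join x y).
Proof. apply sup_ub. auto. Qed.
Lemma join_ub2 (L : Frame) (x y : L) : le y (join x y).
Proof. apply sup_ub. auto. Qed.
Lemma join_least (L : Frame) (x y z : L) : le x z -> le y z -> le (join x y) z.
Proof. intros. apply sup_least. intros w [->| ->]; auto. Qed.

Lemma join_mono (L : Frame) (x y x' y' : L) : le x x' -> le y y' -> le (join x y) (join x' y').
Proof.
  intros. apply join_least.
  - eapply le_trans; eauto. apply join_ub1.
  - eapply le_trans; eauto. apply join_ub2.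
Qed.

Lemma meet_comm (L : Frame) (x y : L) : meet x y = meet y x.
Proof. apply le_antisym; apply meet_greatest; (apply meet_lb1 || apply meet_lb2). Qed.

Lemma meet_mono (L : Frame) (x y x' y' : L) : le x x' -> le y y' -> le (meet x y) (meet x' y').
Proof.
  intros. apply meet_greatest.
  - eapply le_trans; [apply meet_lb1|]; auto.
  - eapply le_trans; [apply meet_lb2|]; auto.
Qed.

Lemma meet_join (L : Frame) (x u v : L) : le (meet x (join u v)) (join (meet x u) (meet x v)).
Proof.
  unfold join at 1. rewrite meet_sup_distr. apply sup_least.
  intros z [s [[-> | ->] ->]]; [apply join_ub1 | apply join_ub2].
Qed.

Lemma himpl_intro (L : Frame) (x y z : L) : le (meet z x) y -> le z (himpl x y).
Proof. intros. apply sup_ub. auto. Qed.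

Lemma himpl_elim (L : Frame) (x y : L) : le (meet x (himpl x y)) y.
Proof.
  unfold himpl. rewrite meet_sup_distr. apply sup_least.
  intros z [s [Hs ->]]. rewrite meet_comm. auto.
Qed.

Lemma meet_pcompl (L : Frame) (x : L) : meet x (pcompl x) = bot.
Proof. apply le_bot_eq. apply himpl_elim. Qed.

Lemma pcompl_anti (L : Frame) (c y : L) : le c y -> le (pcompl y) (pcompl c).
Proof.
  intros H. apply himpl_intro.
  eapply le_trans; [|apply (himpl_elim y bot)].
  rewrite meet_comm. apply meet_mono; auto. apply le_refl.
Qed.

Lemma le_meet_eq (L : Frame) (x y : L) : le x y -> meet x y = x.
Proof. intros. apply le_antisym. apply meet_lb1. apply meet_greatest; auto. apply le_refl. Qed.

Lemma wi_le (L : Frame) (w y : L) : well_inside w y -> le w y.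
Proof.
  unfold well_inside. intros H.
  assert (E : meet w (join (pcompl w) y) = w) by (rewrite H; apply le_meet_eq, le_top).
  rewrite <- E. eapply le_trans; [apply meet_join|].
  apply join_least.
  - rewrite meet_pcompl. apply bot_le.
  - apply meet_lb2.
Qed.

Lemma wi_exists (L : Frame) (z : L) : regular L -> z <> bot ->
  exists w, well_inside w z /\ w <> bot.
Proof.
  intros R Hz. apply NNPP. intros C. apply Hz. apply le_bot_eq.
  rewrite (R z). apply sup_least. intros w Hw.
  destruct (classic (w = bot)) as [-> | N]; [apply le_refl|].
  exfalso; apply C; eauto.
Qed.

Lemma split_nonzero (L : Frame) (y : L) : regular L -> no_isolated_points L -> y <> bot ->
  exists c d : L, c <> bot /\ le c y /\ d <> bot /\ le d y /\ meet c d = bot.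
Proof.
  intros R NI Hy.
  destruct (classic (exists w, well_inside w y /\ w <> bot /\ meet y (pcompl w) <> bot))
    as [[w [Hw [Hw0 Hm]]] | Hbad].
  { exists w, (meet y (pcompl w)). repeat split; auto.
    - apply wi_le; auto.
    - apply meet_lb1.
    - apply le_bot_eq. rewrite <- (meet_pcompl w).
      apply meet_mono; [apply le_refl | apply meet_lb2]. }
  exfalso.
  assert (Atom : forall z, z <> bot -> le z y -> z = y).
  { intros z Hz Hzy. destruct (wi_exists R Hz) as [w [Hw Hw0]].
    assert (Hwy : well_inside w y).
    { unfold well_inside in *. apply top_le_eq. rewrite <- Hw.
      apply join_mono; [apply le_refl | auto]. }
    assert (Hm : meet y (pcompl w) = bot).
    { apply NNPP. intro N. apply Hbad. eauto. }
    apply le_antisym; auto.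
    assert (E : meet y (join (pcompl w) z) = y) by (rewrite Hw; apply le_meet_eq, le_top).
    rewrite <- E. eapply le_trans; [apply meet_join|].
    apply join_least. rewrite Hm. apply bot_le. apply meet_lb2. }
  assert (Dich : forall x : L, meet y x = bot \/ le y x).
  { intros x. destruct (classic (meet y x = bot)) as [|N]; auto. right.
    rewrite <- (Atom _ N (meet_lb1 _ _ _)). apply meet_lb2. }
  apply (NI (pcompl y)). split.
  - split.
    + intro E. apply Hy. rewrite <- (meet_pcompl y), E. symmetry. apply le_meet_eq, le_top.
    + intros x x' H.
      destruct (Dich x) as [A|A].
      { left. apply himpl_intro. rewrite meet_comm, A. apply le_refl. }
      destruct (Dich x') as [B|B].
      { right. apply himpl_intro. rewrite meet_comm, B. apply le_refl. }
      exfalso. apply Hy. apply le_bot_eq.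
      eapply le_trans; [|apply (himpl_elim y bot)].
      apply meet_greatest; [apply le_refl|].
      eapply le_trans; [|exact H]. apply meet_greatest; auto.
  - exists y. intros z. split.
    + intros [-> | ->].
      * exists top. apply eq_sym, top_le_eq, himpl_intro, le_top.
      * exists bot. reflexivity.
    + intros [u ->]. destruct (Dich u) as [A|A].
      * right. apply le_antisym.
        -- apply himpl_intro. rewrite <- A. apply meet_greatest.
           apply meet_lb2. eapply le_trans; [|apply (himpl_elim y u)].
           rewrite meet_comm. apply le_refl.
        -- apply himpl_intro. eapply le_trans; [|apply bot_le].
           rewrite meet_comm. apply himpl_elim.
      * left. apply top_le_eq, himpl_intro. eapply le_trans; [apply meet_lb2|auto].
Qed.

Theorem lemma5p1 (L : Frame) (a b : L) :
  regular L -> no_isolated_points L ->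
  pcompl a = bot -> b <> bot ->
  exists c d : L,
    c <> bot /\ le c b /\ d <> bot /\ le d b /\
    meet c d = bot /\
    join a (pcompl c) = top /\ join a (pcompl d) = top.
Proof.
  intros R NI Ha Hb.
  assert (Hab : meet a b <> bot).
  { intro E. apply Hb. apply le_bot_eq. rewrite <- Ha. apply himpl_intro.
    rewrite meet_comm, E. apply le_refl. }
  destruct (wi_exists R Hab) as [y [Hy Hy0]].
  destruct (split_nonzero R NI Hy0) as [c [d [Hc [Hcy [Hd [Hdy Hcd]]]]]].
  assert (Hyab := wi_le Hy).
  assert (G : forall e, le e y -> join a (pcompl e) = top).
  { intros e He. apply top_le_eq. unfold well_inside in Hy. rewrite <- Hy.
    eapply le_trans; [|apply join_least; [apply join_ub2 | apply join_ub1]].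
    apply join_mono. apply pcompl_anti; auto. apply meet_lb1. }
  exists c, d. repeat split; auto.
  - eapply le_trans; [exact Hcy|]. eapply le_trans; [exact Hyab|apply meet_lb2].
  - eapply le_trans; [exact Hdy|]. eapply le_trans; [exact Hyab|apply meet_lb2].
Qed.
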